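(* Let $Q:(-\infty,-1)\to(-\infty,0)$ be the inverse of the strictly increasing function $G\mapsto G-e^G$ on $(-\infty,0)$, and define $R:\mathbb{R}\to\mathbb{R}$ by $R(V)=-2(1-e^{Q(V)})^2$ for $V<-1$ and $R(V)=4(V+1)$ for $V\ge -1$. Fix $m<-1$. For $n\in\mathbb{R}$ let $V(t;n)$ denote the unique solution of $V''+3V'=R(V)$, $t>0$, $V(0)=m$, $V'(0)=n$ (prime denoting $d/dt$, $V_t=dV/dt$). Define $\beta^-=\{n\in\mathbb{R}: \text{there exists } t>0 \text{ with } V_t(t;n)<0\}$ and $\beta^+=\{n\in\mathbb{R}: V_t(t;n)>0 \text{ for all } t\ge 0 \text{ and } V(t;n)>-1 \text{ for some } t>0\}$. Then $\beta^+$ and $\beta^-$ are both open and nonempty subsets of $\mathbb{R}$. *)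

(* Defs.v *)
From Stdlib Require Import Reals ClassicalEpsilon.
From Coquelicot Require Import Coquelicot.
Open Scope R_scope.

(* Q : (-oo,-1) -> (-oo,0), the inverse of G |-> G - e^G on (-oo,0).
   For v < -1 there is exactly one G < 0 with G - exp G = v;
   Q v is that G (its value for v >= -1 is irrelevant). *)
Definition Q (v : R) : R :=
  epsilon (inhabits 0) (fun G => G < 0 /\ G - exp G = v).

Definition Rf (v : R) : R :=
  if Rlt_dec v (-1) then -2 * (1 - exp (Q v)) ^ 2 else 4 * (v + 1).

(* V n t = V(t;n), Vt n t = V_t(t;n): for every n, (V n) solves
   V'' + 3 V' = R(V) for t > 0, with V(0) = m, V_t(0) = n, where V and V_t
   are continuous from the right at t = 0. *)
Definition is_solution_family (m : R) (V Vt : R -> R -> R) : Prop :=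
  forall n : R,
    V n 0 = m /\ Vt n 0 = n /\
    filterlim (V n) (at_right 0) (locally m) /\
    filterlim (Vt n) (at_right 0) (locally n) /\
    (forall t, 0 < t -> is_derive (V n) t (Vt n t)) /\
    (forall t, 0 < t -> is_derive (Vt n) t (Rf (V n t) - 3 * Vt n t)).

Definition beta_minus (Vt : R -> R -> R) (n : R) : Prop :=
  exists t, 0 < t /\ Vt n t < 0.

Definition beta_plus (V Vt : R -> R -> R) (n : R) : Prop :=
  (forall t, 0 <= t -> 0 < Vt n t) /\ (exists t, 0 < t /\ -1 < V n t).

(* Main.v *)
Require Import Defs.
From Stdlib Require Import Reals Lra Psatz ClassicalEpsilon.
From Coquelicot Require Import Coquelicot.
Open Scope R_scope.

Lemma phi_Q v : v < -1 -> Q v < 0 /\ Q v - exp (Q v) = v.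
Proof.
  intro hv. unfold Q. apply epsilon_spec.
  assert (hc : continuity (fun G => G - exp G)).
  { apply continuity_minus. apply derivable_continuous, derivable_id. apply derivable_continuous, derivable_exp. }
  destruct (IVT_gen (fun G => G - exp G) v 0 v hc) as [x [hx1 hx2]].
  - assert (exp v > 0) by apply exp_pos. rewrite exp_0.
    rewrite Rmin_left by lra. rewrite Rmax_right by lra. lra.
  - rewrite Rmin_left in hx1 by lra. rewrite Rmax_right in hx1 by lra.
    exists x. split; [|exact hx2].
    destruct hx1 as [_ h0]. destruct h0 as [h0|h0]; [exact h0|].
    subst x. rewrite exp_0 in hx2. lra.
Qed.

Lemma incr' (f df : R -> R) a b :
  (forall x, a <= x <= b -> is_derive f x (df x)) ->
  (forall x, a <= x <= b -> 0 <= df x) -> a <= b -> f a <= f b.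
Proof.
  intros hd hp hab.
  destruct (MVT_gen f a b df) as [c [hc1 hc2]].
  - rewrite Rmin_left by lra; rewrite Rmax_right by lra.
    intros x hx. apply hd. lra.
  - rewrite Rmin_left by lra; rewrite Rmax_right by lra.
    intros x hx. apply continuity_pt_filterlim. apply (ex_derive_continuous (K:=R_AbsRing) (V:=R_NormedModule)).
    eexists. apply hd. exact hx.
  - rewrite Rmin_left in hc1 by lra; rewrite Rmax_right in hc1 by lra.
    assert (0 <= df c) by (apply hp; lra). nra.
Qed.

Lemma exp_le1 x : x <= 0 -> 0 < exp x <= 1.
Proof.
  intro h. split. apply exp_pos. destruct h as [h|h].
  - rewrite <- exp_0. left. apply exp_increasing. exact h.
  - subst. rewrite exp_0. lra.
Qed.

Definition hh (G : R) := -2 * (1 - exp G) ^ 2.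

Lemma hh_lip G1 G2 : G1 <= G2 -> G2 <= 0 ->
  0 <= hh G2 - hh G1 <= 4 * ((G2 - exp G2) - (G1 - exp G1)).
Proof.
  intros h12 h2. unfold hh. split.
  - assert (H := incr' (fun G => -2 * (1 - exp G) ^ 2)
      (fun G => 4 * exp G * (1 - exp G)) G1 G2).
    cbv beta in H. enough (-2 * (1 - exp G1) ^ 2 <= -2 * (1 - exp G2) ^ 2) by lra.
    apply H; auto.
    + intros x hx. auto_derive; auto. ring.
    + intros x hx. assert (0 < exp x <= 1) by (apply exp_le1; lra). nra.
  - assert (H := incr' (fun G => 4 * (G - exp G) - (-2 * (1 - exp G) ^ 2))
      (fun G => 4 * (1 - exp G) ^ 2) G1 G2).
    cbv beta in H. enough (4 * (G1 - exp G1) - (-2 * (1 - exp G1) ^ 2) <=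
      4 * (G2 - exp G2) - (-2 * (1 - exp G2) ^ 2)) by lra.
    apply H; auto.
    + intros x hx. auto_derive; auto. ring.
    + intros x hx. apply Rmult_le_pos; [lra|apply pow2_ge_0].
Qed.

Lemma Rf_mono a b : a <= b -> 0 <= Rf b - Rf a <= 4 * (b - a).
Proof.
  intro hab. unfold Rf.
  destruct (Rlt_dec a (-1)) as [ha|ha]; destruct (Rlt_dec b (-1)) as [hb|hb].
  - destruct (phi_Q a ha) as [qa ea]. destruct (phi_Q b hb) as [qb eb].
    fold (hh (Q a)). fold (hh (Q b)).
    destruct (Rle_dec (Q a) (Q b)) as [hq|hq].
    + pose proof (hh_lip _ _ hq ltac:(lra)). destruct H; split; lra.
    + pose proof (hh_lip (Q b) (Q a) ltac:(lra) ltac:(lra)).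
      assert (a = b) by lra. subst b. split; lra.
  - destruct (phi_Q a ha) as [qa ea]. fold (hh (Q a)).
    pose proof (hh_lip (Q a) 0 ltac:(lra) ltac:(lra)).
    assert (hh0 : hh 0 = 0) by (unfold hh; rewrite exp_0; ring). rewrite hh0, exp_0 in H. destruct H. split; lra.
  - split; lra.
  - split; lra.
Qed.

Lemma Rf_lip a b : Rabs (Rf a - Rf b) <= 4 * Rabs (a - b).
Proof.
  destruct (Rle_dec a b) as [h|h].
  - pose proof (Rf_mono a b h). rewrite (Rabs_minus_sym a b), (Rabs_minus_sym (Rf a)).
    rewrite !Rabs_right by lra. lra.
  - pose proof (Rf_mono b a ltac:(lra)).
    rewrite !Rabs_right by lra. lra.
Qed.

Lemma Rf_ge v : 4 * (v + 1) <= Rf v.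
Proof.
  unfold Rf. destruct (Rlt_dec v (-1)) as [hv|hv]; [|lra].
  destruct (phi_Q v hv) as [q e]. fold (hh (Q v)).
  pose proof (hh_lip (Q v) 0 ltac:(lra) ltac:(lra)).
  assert (hh0 : hh 0 = 0) by (unfold hh; rewrite exp_0; ring). rewrite hh0, exp_0 in H. destruct H. lra.
Qed.
Lemma ballR (x e y : R) : ball x e y <-> Rabs (y - x) < e.
Proof. split; intro h; exact h. Qed.

Lemma lim_plus (f g : R -> R) a b :
  filterlim f (at_right 0) (locally a) -> filterlim g (at_right 0) (locally b) ->
  filterlim (fun t => f t + g t) (at_right 0) (locally (a + b)).
Proof.
  intros hf hg. eapply filterlim_comp_2; [exact hf|exact hg|].
  apply (filterlim_plus (V:=R_NormedModule) a b).
Qed.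

Lemma lim_mult (f g : R -> R) a b :
  filterlim f (at_right 0) (locally a) -> filterlim g (at_right 0) (locally b) ->
  filterlim (fun t => f t * g t) (at_right 0) (locally (a * b)).
Proof.
  intros hf hg. eapply filterlim_comp_2; [exact hf|exact hg|].
  apply (filterlim_mult (K:=R_AbsRing) a b).
Qed.

Lemma lim_const (c : R) : filterlim (fun _ => c) (at_right 0) (locally c).
Proof. apply filterlim_const. Qed.

Lemma lim_id : filterlim (fun t => t) (at_right 0) (locally 0).
Proof.
  apply filterlim_locally. intro eps. exists eps. intros y hy _. exact hy.
Qed.

Lemma lim_exp c : filterlim (fun t => exp (c * t)) (at_right 0) (locally 1).
Proof.
  eapply filterlim_comp. apply lim_mult. apply lim_const. apply lim_id.
  rewrite Rmult_0_r. replace 1 with (exp 0) by apply exp_0.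
  apply (ex_derive_continuous (K:=R_AbsRing) (V:=R_NormedModule)).
  eexists. apply is_derive_exp.
Qed.

Lemma lim_eq (f : R -> R) a b : filterlim f (at_right 0) (locally a) -> a = b ->
  filterlim f (at_right 0) (locally b).
Proof. intros h e; subst; exact h. Qed.

Lemma mono (f df : R -> R) a b : 0 < a -> a <= b ->
  (forall t, 0 < t -> is_derive f t (df t)) -> (forall t, 0 < t -> 0 <= df t) ->
  f a <= f b.
Proof. intros ha hab hd hp. apply (incr' f df a b); auto. intros x hx; apply hd; lra. intros x hx; apply hp; lra. Qed.

Lemma mono_lim (f df : R -> R) L :
  (forall t, 0 < t -> is_derive f t (df t)) -> (forall t, 0 < t -> 0 <= df t) ->
  filterlim f (at_right 0) (locally L) -> forall t, 0 < t -> L <= f t.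
Proof.
  intros hd hp hl t ht.
  destruct (Rle_dec L (f t)) as [h|h]; [exact h|]. exfalso.
  assert (he : 0 < L - f t) by lra.
  destruct (proj1 (filterlim_locally f L) hl (mkposreal _ he)) as [d hd'].
  set (y := Rmin t (d / 2)).
  assert (hy : 0 < y) by (unfold y; apply Rmin_glb_lt; [lra|pose proof (cond_pos d); lra]).
  assert (hyt : y <= t) by apply Rmin_l.
  assert (hyd : y <= d / 2) by apply Rmin_r.
  specialize (hd' y). 
  assert (hb : ball 0 d y). { apply ballR. rewrite Rminus_0_r, Rabs_right by lra. destruct d; simpl in *; lra. }
  specialize (hd' hb hy). apply ballR in hd'. simpl in hd'.
  pose proof (mono f df y t hy hyt hd hp).
  apply Rabs_def2 in hd'. destruct hd'. change (minus (f y) L) with (f y - L) in *. lra.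
Qed.
Ltac fixD f t f' hf :=
  change (Derive (fun x => f x) t) with (Derive f t);
  rewrite (is_derive_unique f t f' hf).

Lemma der_E (f g : R -> R) f' g' t : is_derive f t f' -> is_derive g t g' ->
  is_derive (fun s => -((f s ^ 2 + g s ^ 2) * exp (-5 * s))) t
   (-((2 * f t * f' + 2 * g t * g') * exp (-5 * t) + (f t ^ 2 + g t ^ 2) * (-5 * exp (-5 * t)))).
Proof.
  intros hf hg.
  auto_derive.
  - split; [eexists; exact hf|split; [eexists; exact hg|exact I]].
  - fixD f t f' hf. fixD g t g' hg. ring.
Qed.

Lemma der_minus (f g : R -> R) f' g' t : is_derive f t f' -> is_derive g t g' ->
  is_derive (fun s => f s - g s) t (f' - g').
Proof.
  intros hf hg. auto_derive.
  - split; [eexists; exact hf|split; [eexists; exact hg|exact I]].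
  - fixD f t f' hf. fixD g t g' hg. ring.
Qed.

Lemma der_P (f g : R -> R) f' g' t : is_derive f t f' -> is_derive g t g' ->
  is_derive (fun s => (f s + 4 * (g s + 1)) * exp (-1 * s)) t
    ((f' + 4 * g') * exp (-1 * t) - (f t + 4 * (g t + 1)) * exp (-1 * t)).
Proof.
  intros hf hg. auto_derive.
  - split; [eexists; exact hf|split; [eexists; exact hg|exact I]].
  - fixD f t f' hf. fixD g t g' hg. ring.
Qed.

Lemma der_N (f g : R -> R) f' g' t : is_derive f t f' -> is_derive g t g' ->
  is_derive (fun s => (f s - (g s + 1)) * exp (4 * s)) t
    ((f' - g') * exp (4 * t) + (f t - (g t + 1)) * (4 * exp (4 * t))).
Proof.
  intros hf hg. auto_derive.
  - split; [eexists; exact hf|split; [eexists; exact hg|exact I]].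
  - fixD f t f' hf. fixD g t g' hg. ring.
Qed.

Ltac Rring := match goal with |- ?a = ?b => change (a = b :> R); ring end.

Lemma lim_pow2 (f : R -> R) a : filterlim f (at_right 0) (locally a) ->
  filterlim (fun t => f t ^ 2) (at_right 0) (locally (a ^ 2)).
Proof.
  intro h. apply filterlim_ext with (f := fun t => f t * f t). intro; ring.
  eapply lim_eq. apply (lim_mult _ _ _ _ h h). change (a * a = a ^ 2 :> R). ring.
Qed.

Lemma lim_opp (f : R -> R) a : filterlim f (at_right 0) (locally a) ->
  filterlim (fun t => - f t) (at_right 0) (locally (- a)).
Proof.
  intro h. apply filterlim_ext with (f := fun t => -1 * f t). intro; Rring.
  eapply lim_eq. apply (lim_mult _ _ _ _ (lim_const (-1)) h). Rring.
Qed.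

Lemma lim_minus (f g : R -> R) a b :
  filterlim f (at_right 0) (locally a) -> filterlim g (at_right 0) (locally b) ->
  filterlim (fun t => f t - g t) (at_right 0) (locally (a - b)).
Proof. intros hf hg. apply lim_plus; [exact hf|apply lim_opp; exact hg]. Qed.

Lemma core W Z D : Rabs D <= 4 * Rabs W ->
  2 * W * Z + 2 * Z * (D - 3 * Z) <= 5 * (W ^ 2 + Z ^ 2).
Proof.
  intro h.
  pose proof (Rle_abs (Z * D)). pose proof (Rle_abs (W * Z)).
  rewrite Rabs_mult in H, H0.
  pose proof (pow2_abs W). pose proof (pow2_abs Z).
  pose proof (Rabs_pos Z). pose proof (Rabs_pos W).
  assert (Rabs Z * Rabs D <= 4 * Rabs Z * Rabs W) by nra.
  assert (0 <= (Rabs W - Rabs Z) ^ 2) by apply pow2_ge_0.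
  nra.
Qed.

Lemma sq_abs x c : 0 <= c -> x ^ 2 <= c ^ 2 -> Rabs x <= c.
Proof.
  intros hc h. destruct (Rle_dec (Rabs x) c) as [h'|h']; [exact h'|].
  pose proof (pow2_abs x). nra.
Qed.

Lemma exp_ge1 y : 0 <= y -> 1 <= exp y.
Proof.
  intro h. destruct h as [h|h].
  - rewrite <- exp_0. left. apply exp_increasing. exact h.
  - subst. rewrite exp_0. lra.
Qed.

Lemma est m V Vt (hV : is_solution_family m V Vt) n n' t : 0 < t ->
  (V n' t - V n t) ^ 2 + (Vt n' t - Vt n t) ^ 2 <= (n' - n) ^ 2 * exp (5 * t).
Proof.
  intro ht.
  destruct (hV n) as [a0 [a1 [al1 [al2 [ad1 ad2]]]]].
  destruct (hV n') as [b0 [b1 [bl1 [bl2 [bd1 bd2]]]]].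
  assert (H := mono_lim (fun s => -(((V n' s - V n s) ^ 2 + (Vt n' s - Vt n s) ^ 2) * exp (-5 * s)))
    (fun s => -((2 * (V n' s - V n s) * (Vt n' s - Vt n s) + 2 * (Vt n' s - Vt n s) *
          ((Rf (V n' s) - 3 * Vt n' s) - (Rf (V n s) - 3 * Vt n s))) * exp (-5 * s)
          + ((V n' s - V n s) ^ 2 + (Vt n' s - Vt n s) ^ 2) * (-5 * exp (-5 * s))))
    (- ((m - m) ^ 2 + (n' - n) ^ 2) * 1)).
  cbv beta in H.
  assert (H' : - ((m - m) ^ 2 + (n' - n) ^ 2) * 1 <=
    - (((V n' t - V n t) ^ 2 + (Vt n' t - Vt n t) ^ 2) * exp (-5 * t))).
  { apply H; auto.
    - intros s hs. apply (der_E (fun s => V n' s - V n s) (fun s => Vt n' s - Vt n s)).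
      + apply der_minus; auto.
      + apply der_minus; auto.
    - intros s hs.
      pose proof (exp_pos (-5 * s)).
      pose proof (core (V n' s - V n s) (Vt n' s - Vt n s) (Rf (V n' s) - Rf (V n s))
        (Rf_lip _ _)).
      set (W := V n' s - V n s) in *. set (Z := Vt n' s - Vt n s) in *.
      replace ((Rf (V n' s) - 3 * Vt n' s) - (Rf (V n s) - 3 * Vt n s)) with
        ((Rf (V n' s) - Rf (V n s)) - 3 * Z) by (unfold Z; ring).
      nra.
    - eapply lim_eq.
      + apply lim_opp. apply lim_mult.
        * apply lim_plus; apply lim_pow2; apply lim_minus.
          exact bl1. exact al1. exact bl2. exact al2.
        * apply lim_exp.
      + Rring. }
  pose proof (exp_pos (5 * t)).
  assert (exp (-5 * t) * exp (5 * t) = 1) by (rewrite <- exp_plus; replace (-5 * t + 5 * t) with 0 by ring; apply exp_0).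
  replace (m - m) with 0 in H' by ring.
  set (E := (V n' t - V n t) ^ 2 + (Vt n' t - Vt n t) ^ 2) in *.
  assert (E * exp (-5 * t) <= (n' - n) ^ 2) by lra.
  assert (E * exp (-5 * t) * exp (5 * t) <= (n' - n) ^ 2 * exp (5 * t)) by (apply Rmult_le_compat_r; lra).
  replace (E * exp (-5 * t) * exp (5 * t)) with E in H3 by (rewrite Rmult_assoc, H1; ring).
  exact H3.
Qed.

Lemma est_abs m V Vt (hV : is_solution_family m V Vt) n n' t : 0 < t ->
  Rabs (V n' t - V n t) <= Rabs (n' - n) * exp (5 * t / 2) /\
  Rabs (Vt n' t - Vt n t) <= Rabs (n' - n) * exp (5 * t / 2).
Proof.
  intro ht. pose proof (est m V Vt hV n n' t ht).
  assert (e : (Rabs (n' - n) * exp (5 * t / 2)) ^ 2 = (n' - n) ^ 2 * exp (5 * t)).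
  { rewrite Rpow_mult_distr, pow2_abs. f_equal. simpl. rewrite Rmult_1_r, <- exp_plus. f_equal. field. }
  assert (0 <= Rabs (n' - n) * exp (5 * t / 2)).
  { apply Rmult_le_pos. apply Rabs_pos. left; apply exp_pos. }
  pose proof (pow2_ge_0 (V n' t - V n t)). pose proof (pow2_ge_0 (Vt n' t - Vt n t)).
  split; apply sq_abs; auto; rewrite e; lra.
Qed.

Lemma Pmono m V Vt (hV : is_solution_family m V Vt) n :
  (forall s, 0 < s -> is_derive (fun s => (Vt n s + 4 * (V n s + 1)) * exp (-1 * s)) s
    (((Rf (V n s) - 3 * Vt n s) + 4 * Vt n s) * exp (-1 * s) - (Vt n s + 4 * (V n s + 1)) * exp (-1 * s)))
  /\ (forall s, 0 < s -> 0 <= ((Rf (V n s) - 3 * Vt n s) + 4 * Vt n s) * exp (-1 * s) - (Vt n s + 4 * (V n s + 1)) * exp (-1 * s)).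
Proof.
  destruct (hV n) as [a0 [a1 [al1 [al2 [ad1 ad2]]]]]. split.
  - intros s hs. apply der_P; auto.
  - intros s hs. pose proof (exp_pos (-1 * s)). pose proof (Rf_ge (V n s)). nra.
Qed.

Lemma Nmono m V Vt (hV : is_solution_family m V Vt) n :
  (forall s, 0 < s -> is_derive (fun s => (Vt n s - (V n s + 1)) * exp (4 * s)) s
    (((Rf (V n s) - 3 * Vt n s) - Vt n s) * exp (4 * s) + (Vt n s - (V n s + 1)) * (4 * exp (4 * s))))
  /\ (forall s, 0 < s -> 0 <= ((Rf (V n s) - 3 * Vt n s) - Vt n s) * exp (4 * s) + (Vt n s - (V n s + 1)) * (4 * exp (4 * s))).
Proof.
  destruct (hV n) as [a0 [a1 [al1 [al2 [ad1 ad2]]]]]. split.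
  - intros s hs. apply der_N; auto.
  - intros s hs. pose proof (exp_pos (4 * s)). pose proof (Rf_ge (V n s)). nra.
Qed.

Lemma forward m V Vt (hV : is_solution_family m V Vt) n a t :
  0 < a -> a <= t -> -1 < V n a -> 0 < Vt n a -> 0 < Vt n t.
Proof.
  intros ha hat hV1 hVt.
  destruct (Pmono m V Vt hV n) as [pd pp].
  destruct (Nmono m V Vt hV n) as [nd np].
  pose proof (mono _ _ a t ha hat pd pp) as HP.
  pose proof (mono _ _ a t ha hat nd np) as HN.
  cbv beta in HP, HN.
  set (P1 := Vt n a + 4 * (V n a + 1)) in *. set (N1 := Vt n a - (V n a + 1)) in *.
  set (Pt := Vt n t + 4 * (V n t + 1)) in *. set (Nt := Vt n t - (V n t + 1)) in *.
  assert (hx : exp (-1 * a) = exp (-1 * t) * exp (t - a)) by (rewrite <- exp_plus; f_equal; ring).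
  assert (hy : exp (4 * t) = exp (4 * a) * exp (4 * (t - a))) by (rewrite <- exp_plus; f_equal; ring).
  pose proof (exp_ge1 (t - a) ltac:(lra)). pose proof (exp_ge1 (4 * (t - a)) ltac:(lra)).
  pose proof (exp_pos (-1 * t)). pose proof (exp_pos (4 * a)).
  rewrite hx in HP. rewrite hy in HN.
  set (x := exp (t - a)) in *. set (y := exp (4 * (t - a))) in *.
  set (et := exp (-1 * t)) in *. set (ea := exp (4 * a)) in *.
  assert (h1 : P1 * x <= Pt) by nra.
  assert (h2 : N1 <= Nt * y) by nra.
  assert (h3 : 0 < P1) by (unfold P1; lra).
  assert (5 * Vt n t = Pt + 4 * Nt) by (unfold Pt, Nt; ring).
  destruct (Rle_dec 0 N1).
  - assert (0 <= Nt) by nra. nra.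
  - assert (N1 <= Nt) by nra.
    assert (5 * Vt n a = P1 + 4 * N1) by (unfold P1, N1; ring). nra.
Qed.

Lemma exp_mono x y : x <= y -> exp x <= exp y.
Proof. intros [h|h]. left; apply exp_increasing; exact h. subst; lra. Qed.

Lemma der_lin (f : R -> R) f' c t : is_derive f t f' ->
  is_derive (fun s => f s + c * s) t (f' + c).
Proof.
  intros hf. auto_derive.
  - eexists; exact hf.
  - fixD f t f' hf. ring.
Qed.

Lemma minus_R (x y : R) : minus x y = x - y.
Proof. reflexivity. Qed.

Lemma bm_ex m V Vt (hV : is_solution_family m V Vt) : exists n, beta_minus Vt n.
Proof.
  exists (-1). destruct (hV (-1)) as [a0 [a1 [al1 [al2 [ad1 ad2]]]]].
  assert (he : 0 < 1 / 2) by lra.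
  destruct (proj1 (filterlim_locally (Vt (-1)) (-1)) al2 (mkposreal _ he)) as [d hd].
  pose proof (cond_pos d).
  assert (hb : ball 0 d (d / 2)). { apply ballR. rewrite Rminus_0_r. rewrite Rabs_right; lra. }
  specialize (hd (d / 2) hb ltac:(lra)). apply ballR in hd. simpl in hd.
  exists (d / 2). split; [lra|].
  change (minus (Vt (-1) (d / 2)) (-1)) with (Vt (-1) (d / 2) - -1) in hd.
  apply Rabs_def2 in hd. destruct hd. rewrite minus_R in *. simpl in *. lra.
Qed.

Lemma bm_open m V Vt (hV : is_solution_family m V Vt) : open (beta_minus Vt).
Proof.
  intros n [t0 [ht0 hv]].
  set (K := exp (5 * t0 / 2)). assert (hK : 0 < K) by apply exp_pos.
  assert (he : 0 < (- Vt n t0) / (2 * K)) by (apply Rdiv_lt_0_compat; lra).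
  exists (mkposreal _ he). intros n' hb. apply ballR in hb. simpl in hb.
  exists t0. split; [exact ht0|].
  destruct (est_abs m V Vt hV n n' t0 ht0) as [_ h2]. fold K in h2.
  assert (Rabs (n' - n) * K < - Vt n t0 / 2).
  { replace (- Vt n t0 / 2) with ((- Vt n t0) / (2 * K) * K) by (field; lra).
    apply Rmult_lt_compat_r; auto. }
  pose proof (Rle_abs (Vt n' t0 - Vt n t0)). lra.
Qed.

Lemma bp_ex m (hm : m < -1) V Vt (hV : is_solution_family m V Vt) : exists n, beta_plus V Vt n.
Proof.
  set (n0 := 1 - 4 * (m + 1)). exists n0.
  destruct (hV n0) as [a0 [a1 [al1 [al2 [ad1 ad2]]]]].
  destruct (Pmono m V Vt hV n0) as [pd pp].
  destruct (Nmono m V Vt hV n0) as [nd np].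
  assert (HP := mono_lim _ _ ((n0 + 4 * (m + 1)) * 1) pd pp).
  assert (HN := mono_lim _ _ ((n0 - (m + 1)) * 1) nd np).
  cbv beta in HP, HN.
  assert (lP : forall t, 0 < t -> (n0 + 4 * (m + 1)) * 1 <= (Vt n0 t + 4 * (V n0 t + 1)) * exp (-1 * t)).
  { apply HP. apply lim_mult; [|apply lim_exp].
    apply lim_plus; [exact al2|]. eapply lim_eq. apply lim_mult. apply lim_const.
    apply lim_plus. exact al1. apply lim_const. reflexivity. }
  assert (lN : forall t, 0 < t -> (n0 - (m + 1)) * 1 <= (Vt n0 t - (V n0 t + 1)) * exp (4 * t)).
  { apply HN. apply lim_mult; [|apply lim_exp].
    apply lim_minus; [exact al2|]. apply lim_plus. exact al1. apply lim_const. }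
  assert (hVt : forall t, 0 < t -> 1 / 5 <= Vt n0 t).
  { intros t ht. specialize (lP t ht). specialize (lN t ht).
    pose proof (exp_le1 (-1 * t) ltac:(lra)). pose proof (exp_pos (4 * t)).
    replace ((n0 + 4 * (m + 1)) * 1) with 1 in lP by (unfold n0; ring).
    replace ((n0 - (m + 1)) * 1) with (1 - 5 * (m + 1)) in lN by (unfold n0; ring).
    set (Pt := Vt n0 t + 4 * (V n0 t + 1)) in *. set (Nt := Vt n0 t - (V n0 t + 1)) in *.
    assert (0 < Pt) by nra. assert (1 <= Pt) by nra. assert (0 < Nt) by nra.
    assert (5 * Vt n0 t = Pt + 4 * Nt) by (unfold Pt, Nt; ring). lra. }
  split.
  - intros t [ht|ht].
    + pose proof (hVt t ht). lra.
    + subst t. rewrite a1. unfold n0. lra.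
  - assert (HU := mono_lim (fun s => V n0 s + (-1/5) * s) (fun s => Vt n0 s + (-1/5)) (m + (-1/5) * 0)).
    cbv beta in HU.
    set (t := 5 * (-(m + 1)) + 5). exists t. split; [unfold t; lra|].
    assert (m + -1 / 5 * 0 <= V n0 t + -1 / 5 * t).
    { apply HU.
      - intros s hs. apply der_lin. apply ad1; exact hs.
      - intros s hs. pose proof (hVt s hs). lra.
      - apply lim_plus. exact al1. apply lim_mult. apply lim_const. apply lim_id.
      - unfold t; lra. }
    unfold t in *. lra.
Qed.

Lemma bp_open m V Vt (hV : is_solution_family m V Vt) : open (beta_plus V Vt).
Proof.
  intros n [hpos [t1 [ht1 hv1]]].
  destruct (hV n) as [a0 [a1 [al1 [al2 [ad1 ad2]]]]].
  assert (hn : 0 < n) by (rewrite <- a1; apply hpos; lra).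
  assert (he : 0 < n / 2) by lra.
  destruct (proj1 (filterlim_locally (Vt n) n) al2 (mkposreal _ he)) as [d hd].
  pose proof (cond_pos d).
  assert (hsmall : forall y, 0 < y < d -> n / 2 < Vt n y).
  { intros y hy. assert (hb : ball 0 d y). { apply ballR. rewrite Rminus_0_r. rewrite Rabs_right; lra. }
    specialize (hd y hb ltac:(lra)). apply ballR in hd.
    apply Rabs_def2 in hd. destruct hd. rewrite minus_R in *. simpl in *. lra. }
  set (s := Rmin (d / 2) t1).
  assert (hs : 0 < s) by (unfold s; apply Rmin_glb_lt; lra).
  assert (hs1 : s <= t1) by apply Rmin_r. assert (hs2 : s <= d / 2) by apply Rmin_l.
  destruct (continuity_ab_min (Vt n) s t1 hs1) as [mx [hmx1 hmx2]].
  { intros c hc. apply continuity_pt_filterlim.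
    apply (ex_derive_continuous (K:=R_AbsRing) (V:=R_NormedModule)).
    eexists. apply ad2. lra. }
  assert (hmu1 : 0 < Vt n mx) by (apply hpos; lra).
  set (mu := Rmin (n / 2) (Vt n mx)).
  assert (hmu : 0 < mu) by (unfold mu; apply Rmin_glb_lt; lra).
  assert (hmu2 : mu <= n / 2) by apply Rmin_l. assert (hmu3 : mu <= Vt n mx) by apply Rmin_r.
  assert (hlow : forall t, 0 < t <= t1 -> mu <= Vt n t).
  { intros t ht. destruct (Rlt_dec t s).
    - pose proof (hsmall t ltac:(lra)). lra.
    - pose proof (hmx1 t ltac:(lra)). lra. }
  set (K := exp (5 * t1 / 2)).
  assert (hK : 1 <= K) by (apply exp_ge1; lra).
  set (c := Rmin mu (V n t1 + 1)).
  assert (hc : 0 < c) by (unfold c; apply Rmin_glb_lt; lra).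
  assert (hc1 : c <= mu) by apply Rmin_l. assert (hc2 : c <= V n t1 + 1) by apply Rmin_r.
  assert (heps : 0 < c / (2 * K)) by (apply Rdiv_lt_0_compat; lra).
  exists (mkposreal _ heps). intros n' hb. apply ballR in hb. simpl in hb.
  assert (hk : Rabs (n' - n) * K < c / 2).
  { replace (c / 2) with (c / (2 * K) * K) by (field; lra).
    apply Rmult_lt_compat_r. lra. exact hb. }
  pose proof (Rabs_pos (n' - n)).
  assert (hin : forall t, 0 < t <= t1 -> 0 < Vt n' t).
  { intros t ht. destruct (est_abs m V Vt hV n n' t ltac:(lra)) as [_ h2].
    assert (exp (5 * t / 2) <= K) by (apply exp_mono; lra).
    assert (Rabs (n' - n) * exp (5 * t / 2) <= Rabs (n' - n) * K) by (apply Rmult_le_compat_l; lra).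
    pose proof (Rle_abs (Vt n t - Vt n' t)) as Hab. rewrite Rabs_minus_sym in Hab.
    pose proof (hlow t ht). lra. }
  split.
  - intros t [ht|ht].
    + destruct (Rle_dec t t1).
      * apply hin; lra.
      * apply (forward m V Vt hV n' t1 t); try lra.
        -- destruct (est_abs m V Vt hV n n' t1 ht1) as [h1 _]. fold K in h1.
           pose proof (Rle_abs (V n t1 - V n' t1)) as Hab. rewrite Rabs_minus_sym in Hab. lra.
        -- apply hin; lra.
    + subst t. destruct (hV n') as [b0 [b1 _]]. rewrite b1.
      assert (Rabs (n' - n) <= Rabs (n' - n) * K) by nra.
      pose proof (Rle_abs (n - n')) as Hab. rewrite Rabs_minus_sym in Hab. lra.
  - exists t1. split; [exact ht1|].
    destruct (est_abs m V Vt hV n n' t1 ht1) as [h1 _]. fold K in h1.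
    pose proof (Rle_abs (V n t1 - V n' t1)) as Hab. rewrite Rabs_minus_sym in Hab. lra.
Qed.

Theorem lemma4p2 (m : R) (hm : m < -1) (V Vt : R -> R -> R)
  (hV : is_solution_family m V Vt) :
  open (beta_plus V Vt) /\ (exists n, beta_plus V Vt n) /\
  open (beta_minus Vt) /\ (exists n, beta_minus Vt n).
Proof.
  split; [exact (bp_open m V Vt hV)|].
  split; [exact (bp_ex m hm V Vt hV)|].
  split; [exact (bm_open m V Vt hV)|exact (bm_ex m V Vt hV)].
Qed.
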